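(* Let $P$ be a finite nonempty poset with $p$ elements, and let $\epsilon$ and $\mu$ be the labelings of the covering relations $E(P)$ induced by two bijections $\omega,\lambda:P\to\{1,\dots,p\}$. Suppose that $P$ is both $\epsilon$-graded and $\mu$-graded. Then, as polynomials in $t$, $$\Omega\Big(P,\epsilon;t-\frac{r(\epsilon)}{2}\Big)=\Omega\Big(P,\mu;t-\frac{r(\mu)}{2}\Big).$$
   Context: A labeling of a finite poset $P$ with $p$ elements is a bijection $\omega:P\to\{1,\dots,p\}$. Write $x\prec y$ if $y$ covers $x$ and $E(P)=\{(x,y):x\prec y\}$. The labeling $\omega$ induces $\epsilon:E(P)\to\{-1,1\}$, $\epsilon(x,y)=1$ if $\omega(x)<\omega(y)$ and $\epsilon(x,y)=-1$ if $\omega(x)>\omega(y)$. A $(P,\epsilon)$-partition is a map $\sigma:P\to\{1,2,3,\dots\}$ with $\sigma(x)\ge\sigma(y)$ whenever $x\le y$, and $\sigma(x)>\sigma(y)$ whenever $x<y$ and $\omega(x)>\omega(y)$ (equivalently, whenever $x\prec y$ and $\epsilon(x,y)=-1$; so this depends only on $\epsilon$). The order polynomial $\Omega(P,\epsilon;n)$ is the number of $(P,\epsilon)$-partitions with largest part at most $n$; it is a polynomial in $n$ of degree $p$. $P$ is $\epsilon$-graded if the sum $\sum_{i=1}^n\epsilon(x_{i-1},x_i)$ takes the same value for every maximal chain $x_0\prec x_1\prec\cdots\prec x_n$ of $P$; this common value is the rank $r(\epsilon)$. *)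

(* Defs.v *)
From HB Require Import structures.
From mathcomp Require Import all_boot all_order all_algebra.
Set Implicit Arguments. Unset Strict Implicit. Unset Printing Implicit Defensive.
Import Order.TTheory GRing.Theory Num.Theory.
Local Open Scope order_scope.

Section PosetDefs.
Context {d : Order.disp_t} {P : finPOrderType d}.

Definition covers (x y : P) : bool :=
  (x < y) && [forall z : P, ~~ ((x < z) && (z < y))].

Definition labeling (w : P -> nat) : Prop :=
  injective w /\ forall x, (1 <= w x <= #|P|)%N.

Definition eps (w : P -> nat) (x y : P) : int :=
  if (w x < w y)%N then 1%R else (-1)%R.

Definition is_partition (w : P -> nat) (n : nat) (s : P -> nat) : bool :=
  [forall x, (1 <= s x <= n)%N] &&
  [forall x, forall y, (x <= y) ==> (s y <= s x)%N] &&
  [forall x, forall y, ((x < y) && (w y < w x)%N) ==> (s y < s x)%N].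

(* the order polynomial evaluated at n (a number of maps) *)
Definition order_count (w : P -> nat) (n : nat) : nat :=
  #|[set s : {ffun P -> 'I_n.+1} | is_partition w n (fun x => nat_of_ord (s x))]|.

Definition minimal (x : P) : bool := [forall z : P, ~~ (z < x)].
Definition maximal (x : P) : bool := [forall z : P, ~~ (x < z)].

Definition max_chain (x0 : P) (rest : seq P) : bool :=
  minimal x0 && path covers x0 rest && maximal (last x0 rest).

Definition chain_sum (w : P -> nat) (x0 : P) (rest : seq P) : int :=
  (\sum_(e <- pairmap (eps w) x0 rest) e)%R.

Definition graded_rank (w : P -> nat) (r : int) : Prop :=
  forall x0 rest, max_chain x0 rest -> chain_sum w x0 rest = r.

End PosetDefs.

(* Main.v *)
Require Import Defs.
From HB Require Import structures.
From mathcomp Require Import all_boot all_order all_algebra.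
Import Order.TTheory GRing.Theory Num.Theory.
From mathcomp Require Import zify lra.
Set Implicit Arguments. Unset Strict Implicit. Unset Printing Implicit Defensive.

Definition im (X T : finType) (t : {ffun X -> T}) : {set T} := [set t x | x : X].

Lemma L1 n k (phi : k.-tuple 'I_n) : sorted ltn (map val phi) ->
  forall i j : 'I_k, (tnth phi i <= tnth phi j)%N = (i <= j)%N.
Proof.
move=> Hs.
have H : forall i j : 'I_k, (i < j)%N -> (tnth phi i < tnth phi j)%N.
  move=> i j ij; have := sorted_ltn_nth ltn_trans 0 Hs.
  move/(_ i j); rewrite !inE size_map size_tuple !ltn_ord => /(_ isT isT ij).
  by rewrite !(nth_map (tnth phi i)) ?size_tuple ?ltn_ord // -!tnth_nth.
move=> i j; case: (ltngtP i j) => [ij|ji|/val_inj->].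
- by rewrite ltnW // H.
- by rewrite leqNgt H.
- by rewrite !leqnn.
Qed.

Lemma tnth_inj n k (phi : k.-tuple 'I_n) : sorted ltn (map val phi) ->
  injective (tnth phi).
Proof.
move=> Hs i j E; apply/val_inj/anti_leq.
by rewrite -!(L1 Hs) E leqnn.
Qed.

Lemma sorted_enum_ord n (A : {set 'I_n}) : sorted ltn (map val (enum A)).
Proof.
rewrite sorted_map /enum_mem -enumT; apply: sorted_filter.
  by move=> ? ? ?; apply: ltn_trans.
by rewrite -sorted_map val_enum_ord iota_ltn_sorted.
Qed.

Section Count.
Variable (X : finType) (R : (X -> nat) -> bool).
Hypothesis HR : forall s1 s2 : X -> nat,
  (forall x y, (s1 x <= s1 y)%N = (s2 x <= s2 y)%N) -> R s1 = R s2.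

Definition cntk n k := #|[set t : {ffun X -> 'I_n} | R (fun x => val (t x)) & #|im t| == k]|.

Lemma cntk_eq n k : cntk n k = 'C(n, k) * cntk k k.
Proof.
pose T := [set phi : k.-tuple 'I_n | sorted ltn (map val phi)].
pose E := [set c : {ffun X -> 'I_k} | R (fun x => val (c x)) & #|im c| == k].
rewrite /cntk -card_ltn_sorted_tuples -/T -/E -cardsX.
pose g (pc : k.-tuple 'I_n * {ffun X -> 'I_k}) : {ffun X -> 'I_n} :=
  [ffun x => tnth pc.1 (pc.2 x)].
have imT : forall c, c \in E -> im c = setT.
  move=> c; rewrite inE => /andP[_ Hk].
  apply/eqP. rewrite eqEcard. rewrite subsetT. rewrite cardsT. rewrite card_ord. by rewrite (eqP Hk) leqnn.
have Hinj : {in setX T E &, injective g}.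
  move=> [p1 c1] [p2 c2]; rewrite !in_setX /= => /andP[s1 e1] /andP[s2 e2] Eg.
  rewrite inE in s1; rewrite inE in s2.
  have Hm : forall (p : k.-tuple 'I_n) c (p' : k.-tuple 'I_n) c', c \in E ->
      g (p, c) = g (p', c') -> forall y, y \in p -> y \in p'.
    move=> p c p' c' cE Eg' y /tnthP [j ->].
    have : j \in im c by rewrite imT.
    case/imsetP => x _ ->.
    have := congr1 (fun f : {ffun X -> 'I_n} => f x) Eg'; rewrite /g !ffunE /= => ->.
    exact: mem_tnth.
  have ep : p1 = p2.
    apply: val_inj; rewrite /=.
    apply: (irr_sorted_eq (leT := relpre val ltn)).
    - by move=> ? ? ?; apply: ltn_trans.
    - by move=> ?; apply: ltnn.
    - by rewrite -sorted_map.
    - by rewrite -sorted_map.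
    - move=> y; apply/idP/idP. exact (Hm p1 c1 p2 c2 e1 Eg y). exact (Hm p2 c2 p1 c1 e2 (esym Eg) y).
  subst p2; congr pair; apply/ffunP => x.
  have := congr1 (fun f : {ffun X -> 'I_n} => f x) Eg; rewrite /g !ffunE /=.
  exact: tnth_inj.
have -> : [set t : {ffun X -> 'I_n} | R (fun x => val (t x)) & #|im t| == k]
    = g @: setX T E.
  apply/setP => t; rewrite inE; apply/andP/imsetP.
  - case=> Rt Hk.
    pose e := enum (im t).
    have He : size e == k by rewrite -cardE.
    pose phi := Tuple He.
    have idx : forall x, index (t x) e < k.
      move=> x; rewrite -(eqP He) index_mem mem_enum.
      by apply/imsetP; exists x.
    pose c := [ffun x => Ordinal (idx x)].
    have Ht : forall x, t x = tnth phi (c x).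
      move=> x; rewrite ffunE (tnth_nth (t x)) /= nth_index // mem_enum.
      by apply/imsetP; exists x.
    have Hsort : sorted ltn (map val phi) by exact: sorted_enum_ord.
    exists (phi, c); last by apply/ffunP => x; rewrite /g ffunE /= -Ht.
    rewrite !inE /= Hsort /=; apply/andP; split.
      rewrite -(HR (s1 := fun x => val (t x))) // => x y.
      by rewrite !Ht L1.
    suff -> : im c = setT by rewrite cardsT card_ord.
    apply/eqP; rewrite eqEsubset subsetT /=; apply/subsetP => j _.
    apply/imsetP.
    have : tnth phi j \in im t by rewrite -mem_enum; exact: mem_tnth.
    case/imsetP => x _ Ex; exists x => //.
    apply: val_inj; rewrite ffunE /= -Ex (tnth_nth (tnth phi j)) /=.
    by rewrite index_uniq ?enum_uniq // (eqP He).
  - case=> [[p c]]; rewrite !inE /= => /andP[Hs /andP[Rc Hk]] ->.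
    split.
      rewrite (HR (s2 := fun x => val (c x))) // => x y.
      by rewrite /g !ffunE /= L1.
    have -> : im (g (p, c)) = (tnth p) @: (im c).
      by rewrite /im -imset_comp; apply: eq_imset => x; rewrite /g ffunE.
    by rewrite card_imset //; exact: tnth_inj.
by rewrite card_in_imset.
Qed.
End Count.

Local Open Scope ring_scope.

Definition binp (k : nat) : {poly rat} :=
  ((k`!)%:R^-1 : rat) *: \prod_(i < k) ('X - (i%:R)%:P).

Lemma prod_ffact (n k : nat) : \prod_(i < k) ((n%:R : rat) - i%:R) = (n ^_ k)%:R.
Proof.
elim: k => [|k IH]; first by rewrite big_ord0 ffactn0.
rewrite big_ord_recr /= IH ffactnSr natrM.
case: (leqP k n) => kn; first by rewrite natrB.
by rewrite ffact_small // mulr0n !mul0r.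
Qed.

Lemma binpE n k : (binp k).[n%:R] = ('C(n, k))%:R.
Proof.
rewrite /binp hornerZ horner_prod.
under eq_bigr do rewrite hornerXsubC.
rewrite prod_ffact -bin_ffact natrM mulrC mulfK //.
by rewrite pnatr_eq0 -lt0n fact_gt0.
Qed.

Section Count2.
Variable (X : finType) (R : (X -> nat) -> bool).
Hypothesis HR : forall s1 s2 : X -> nat,
  (forall x y, (s1 x <= s1 y)%N = (s2 x <= s2 y)%N) -> R s1 = R s2.

Lemma cnt_sum n : (#|[set t : {ffun X -> 'I_n} | R (fun x => val (t x))]|
   = \sum_(k < #|X|.+1) cntk R n k)%N.
Proof.
rewrite -sum1_card.
rewrite (partition_big (fun t : {ffun X -> 'I_n} => (inord #|im t| : 'I_#|X|.+1)) predT) //=.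
apply: eq_bigr => k _; rewrite sum1_card /cntk; apply: eq_card => t.
rewrite !inE; congr andb; first by rewrite inE.
have Hle : (#|im t| < #|X|.+1)%N.
  by rewrite ltnS (leq_trans (leq_imset_card _ _)) // max_card.
apply/eqP/eqP => [<-|E]; first by rewrite inordK.
by apply/val_inj; rewrite /= inordK.
Qed.

Lemma count_poly : exists f : {poly rat}, forall n,
  f.[n%:R] = (#|[set t : {ffun X -> 'I_n} | R (fun x => val (t x))]|)%:R.
Proof.
exists (\sum_(k < #|X|.+1) ((cntk R k k)%:R : rat) *: binp k) => n.
rewrite cnt_sum horner_sum natr_sum; apply: eq_bigr => k _.
by rewrite (cntk_eq HR n k) hornerZ binpE natrM mulrC.
Qed.
End Count2.

Local Close Scope ring_scope.

Section Poset.
Context {d : Order.disp_t} {P : finPOrderType d}.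
Local Open Scope order_scope.

Lemma min_below (x : P) : exists z, minimal z && (z <= x).
Proof.
move: (leqnn #|[set y : P | y < x]|).
move: {2}#|[set y : P | y < x]| => m; elim: m x => [|m IH] x Hm;
  (case: (boolP (minimal x)) => Hx; first by exists x; rewrite Hx lexx);
  move: Hx; rewrite /minimal negb_forall => /existsP [z]; rewrite negbK => zx.
  have : (0 < #|[set y : P | (y < x)%O]|)%N by apply/card_gt0P; exists z; rewrite inE.
  by rewrite leqn0 in Hm; rewrite (eqP Hm).
have Hp : [set y : P | y < z] \proper [set y : P | y < x].
  apply/properP; split; last by exists z; rewrite !inE ?ltxx.
  by apply/subsetP => y; rewrite !inE => yz; apply: lt_trans zx.
have Hc := proper_card Hp.
have [m0 /andP[m0m m0z]] := IH z (leq_trans Hc Hm).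
by exists m0; apply/andP; split => //; exact: le_trans m0z (ltW zx).
Qed.

Lemma max_above (x : P) : exists z, maximal z && (x <= z).
Proof.
move: (leqnn #|[set y : P | x < y]|).
move: {2}#|[set y : P | x < y]| => m; elim: m x => [|m IH] x Hm;
  (case: (boolP (maximal x)) => Hx; first by exists x; rewrite Hx lexx);
  move: Hx; rewrite /maximal negb_forall => /existsP [z]; rewrite negbK => zx.
  have : (0 < #|[set y : P | (x < y)%O]|)%N by apply/card_gt0P; exists z; rewrite inE.
  by rewrite leqn0 in Hm; rewrite (eqP Hm).
have Hp : [set y : P | z < y] \proper [set y : P | x < y].
  apply/properP; split; last by exists z; rewrite !inE ?ltxx.
  by apply/subsetP => y; rewrite !inE => yz; apply: lt_trans yz.
have Hc := proper_card Hp.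
have [m0 /andP[m0m m0z]] := IH z (leq_trans Hc Hm).
by exists m0; apply/andP; split => //; exact: le_trans (ltW zx) m0z.
Qed.

Lemma chain_ex (x y : P) : x < y -> exists s, path covers x s && (last x s == y).
Proof.
move: (leqnn #|[set z : P | (x < z) && (z < y)]|).
move: {2}#|[set z : P | (x < z) && (z < y)]| => m.
elim: m x y => [|m IH] x y Hm xy;
  (case: (boolP (covers x y)) => Hxy; first by exists [:: y]; rewrite /= Hxy eqxx);
  move: Hxy; rewrite /covers xy /= negb_forall => /existsP [z]; rewrite negbK => /andP[xz zy].
  have : (0 < #|[set u : P | ((x < u) && (u < y))%O]|)%N.
    by apply/card_gt0P; exists z; rewrite inE xz zy.
  by rewrite leqn0 in Hm; rewrite (eqP Hm).
have Hp1 : [set u : P | (x < u) && (u < z)] \proper [set u : P | (x < u) && (u < y)].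
  apply/properP; split; last by exists z; rewrite !inE ?ltxx ?xz ?zy ?andbF.
  by apply/subsetP => u; rewrite !inE => /andP[-> uz]; apply: lt_trans zy.
have Hp2 : [set u : P | (z < u) && (u < y)] \proper [set u : P | (x < u) && (u < y)].
  apply/properP; split; last by exists z; rewrite !inE ?ltxx ?xz ?zy ?andbF.
  by apply/subsetP => u; rewrite !inE => /andP[zu ->]; rewrite (lt_trans xz zu).
have [s1 /andP[p1 l1]] := IH x z (leq_trans (proper_card Hp1) Hm) xz.
have [s2 /andP[p2 l2]] := IH z y (leq_trans (proper_card Hp2) Hm) zy.
exists (s1 ++ s2); rewrite cat_path p1 (eqP l1) p2 /=.
by rewrite last_cat (eqP l1).
Qed.

End Poset.

Section Part.
Context {d : Order.disp_t} {P : finPOrderType d}.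
Local Open Scope ring_scope.

Definition dsc (w : P -> nat) (x y : P) : int := if (w x < w y)%N then 0 else 1.

Lemma dsc_ge0 w x y : 0 <= dsc w x y.
Proof. by rewrite /dsc; case: ifP. Qed.

Definition fsum (F : P -> P -> int) (x : P) (c : seq P) : int :=
  \sum_(e <- pairmap F x c) e.

Lemma fsum_cat F x c1 c2 : fsum F x (c1 ++ c2) = fsum F x c1 + fsum F (last x c1) c2.
Proof. by rewrite /fsum pairmap_cat big_cat. Qed.

Lemma fsum_cons F x y c : fsum F x (y :: c) = F x y + fsum F y c.
Proof. by rewrite /fsum /= big_cons. Qed.

Lemma fsum_nil F x : fsum F x [::] = 0.
Proof. by rewrite /fsum /= big_nil. Qed.

Lemma fsum_dsc_ge0 w x c : 0 <= fsum (dsc w) x c.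
Proof.
elim: c x => [|y c IH] x; first by rewrite fsum_nil.
by rewrite fsum_cons addr_ge0 ?dsc_ge0.
Qed.

Lemma path_sum w (s : P -> int) :
  (forall x y, covers x y -> dsc w x y <= s x - s y) ->
  forall x c, path covers x c -> fsum (dsc w) x c <= s x - s (last x c).
Proof.
move=> H x c; elim: c x => [|y c IH] x /=; first by rewrite fsum_nil subrr.
move=> /andP[cxy pc]; rewrite fsum_cons.
have := H _ _ cxy; have := IH _ pc; lia.
Qed.

Lemma path_dsc0 w x c : path covers x c -> fsum (dsc w) x c = 0 ->
  (w x <= w (last x c))%N.
Proof.
elim: c x => [|y c IH] x /=; first by [].
move=> /andP[_ pc]; rewrite fsum_cons => H0.
have h1 := dsc_ge0 w x y; have h2 := fsum_dsc_ge0 w y c.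
have e1 : dsc w x y = 0 by lia.
have e2 : fsum (dsc w) y c = 0 by lia.
move: e1; rewrite /dsc; case: ifP => // wxy _.
exact: leq_trans (ltnW wxy) (IH _ pc e2).
Qed.

Lemma mono w (s : P -> int) :
  (forall x y, covers x y -> dsc w x y <= s x - s y) ->
  forall x y, (x <= y)%O -> s y <= s x.
Proof.
move=> H x y xy; case: (eqVneq x y) => [->|nxy] //.
have xy' : (x < y)%O by rewrite lt_neqAle nxy xy.
have [c /andP[pc /eqP lc]] := chain_ex xy'.
have := path_sum H pc; have := fsum_dsc_ge0 w x c; rewrite lc; lia.
Qed.

Definition cpart w (n : nat) (s : P -> int) :=
  [/\ forall x, minimal x -> s x <= n%:Z,
      forall x, maximal x -> 1 <= s x &
      forall x y, covers x y -> dsc w x y <= s x - s y].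

Lemma cp_bounds w n s : cpart w n s -> forall x, 1 <= s x /\ s x <= n%:Z.
Proof.
case=> Hmin Hmax Hc x.
have [z /andP[mz zx]] := min_below x.
have [m /andP[mm xm]] := max_above x.
have := mono Hc zx; have := mono Hc xm; have := Hmin _ mz; have := Hmax _ mm.
lia.
Qed.

Lemma cp_part w n s : cpart w n s -> is_partition w n (fun x => absz (s x)).
Proof.
move=> H; have Hb := cp_bounds H; case: H => _ _ Hc.
rewrite /is_partition; apply/andP; split; [apply/andP; split|].
- apply/forallP => x; have := Hb x; case=> h1 h2; apply/andP; split; lia.
- apply/forallP => x; apply/forallP => y; apply/implyP => xy.
  have := mono Hc xy; have := Hb x; have := Hb y; lia.
- apply/forallP => x; apply/forallP => y; apply/implyP => /andP[xy wyx].
  have [c /andP[pc /eqP lc]] := chain_ex xy.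
  have Hne : fsum (dsc w) x c != 0.
    by apply/eqP => /(path_dsc0 pc); rewrite lc leqNgt wyx.
  have := path_sum Hc pc; have := fsum_dsc_ge0 w x c; rewrite lc.
  have := Hb x; have := Hb y; move: Hne; lia.
Qed.

Lemma part_cp w n (s : P -> nat) : injective w -> is_partition w n s ->
  cpart w n (fun x => (s x)%:Z).
Proof.
move=> winj /andP[/andP[/forallP Hb /forallP Hm] /forallP Hs]; split.
- by move=> x _; have := Hb x; lia.
- by move=> x _; have := Hb x; lia.
- move=> x y cxy; have xy : (x < y)%O := (andP cxy).1.
  have := implyP (forallP (Hm x) y) (ltW xy).
  rewrite /dsc; case: ifP => wxy; first by lia.
  have nw : w y != w x by apply/eqP => /winj E; move: xy; rewrite E ltxx.
  have wyx : (w y < w x)%N by rewrite ltn_neqAle nw leqNgt wxy.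
  have := implyP (forallP (Hs x) y); rewrite xy wyx => /(_ isT); lia.
Qed.

Lemma kappa_ex (F : P -> P -> int) :
  (forall x0 c0 x1 c1, max_chain x0 c0 -> max_chain x1 c1 ->
     fsum F x0 c0 = fsum F x1 c1) ->
  exists k : P -> int,
    [/\ forall x, minimal x -> k x = 0,
        forall x y, covers x y -> k y = k x + F x y &
        forall x0 c, max_chain x0 c -> k (last x0 c) = fsum F x0 c].
Proof.
move=> HF.
have Hex : forall x, exists zc : P * seq P,
    minimal zc.1 && path covers zc.1 zc.2 && (last zc.1 zc.2 == x).
  move=> x; have [z /andP[mz zx]] := min_below x.
  case: (eqVneq z x) => [<-|nzx]; first by exists (z, [::]); rewrite /= mz eqxx.
  have zx' : (z < x)%O by rewrite lt_neqAle nzx zx.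
  have [c /andP[pc lc]] := chain_ex zx'.
  by exists (z, c); rewrite /= mz pc lc.
pose k x := fsum F (xchoose (Hex x)).1 (xchoose (Hex x)).2.
have kP : forall x, let zc := xchoose (Hex x) in
    [/\ minimal zc.1, path covers zc.1 zc.2, last zc.1 zc.2 = x & k x = fsum F zc.1 zc.2].
  move=> x /=; have := xchooseP (Hex x); move=> /andP[/andP[? ?] /eqP ?]; by split.
have wd : forall x z c, minimal z -> path covers z c -> last z c = x -> fsum F z c = k x.
  move=> x z c mz pc lc; have [mz' pc' lc' ->] := kP x.
  have [m /andP[mm xm]] := max_above x.
  have [c3 [pc3 lc3]] : exists c3, path covers x c3 /\ last x c3 = m.
    case: (eqVneq x m) => [<-|nxm]; first by exists [::].
    have xm' : (x < m)%O by rewrite lt_neqAle nxm xm.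
    have [c3 /andP[p l]] := chain_ex xm'.
    by exists c3; split => //; apply/eqP.
  have mc1 : max_chain z (c ++ c3).
    by rewrite /max_chain mz cat_path pc lc pc3 last_cat lc lc3 mm.
  have mc2 : max_chain (xchoose (Hex x)).1 ((xchoose (Hex x)).2 ++ c3).
    by rewrite /max_chain mz' cat_path pc' lc' pc3 last_cat lc' lc3 mm.
  by have := HF _ _ _ _ mc1 mc2; rewrite !fsum_cat lc lc' => /addIr.
exists k; split.
- by move=> x mx; rewrite -(wd x x [::]) ?fsum_nil.
- move=> x y cxy; have [mz' pc' lc' ->] := kP x.
  rewrite -(wd y (xchoose (Hex x)).1 ((xchoose (Hex x)).2 ++ [:: y])) //.
  + by rewrite fsum_cat lc' fsum_cons fsum_nil addr0.
  + by rewrite cat_path pc' lc' /= cxy.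
  + by rewrite last_cat lc'.
- by move=> x0 c /andP[/andP[m0 p0] _]; rewrite (wd (last x0 c) x0 c).
Qed.

End Part.

Section Transfer.
Context {d : Order.disp_t} {P : finPOrderType d}.
Local Open Scope ring_scope.

Lemma part_ext (w : P -> nat) n (s1 s2 : P -> nat) : (forall x, s1 x = s2 x) ->
  is_partition w n s1 = is_partition w n s2.
Proof.
move=> E; rewrite /is_partition; congr (_ && _ && _);
  (apply: eq_forallb => x); (try apply: eq_forallb => y); by rewrite !E.
Qed.

Definition Rw (w : P -> nat) (s : P -> nat) :=
  [forall x, forall y, (x <= y)%O ==> (s y <= s x)%N] &&
  [forall x, forall y, ((x < y)%O && (w y < w x)%N) ==> (s y < s x)%N].

Lemma Rw_ext w (s1 s2 : P -> nat) : (forall x, s1 x = s2 x) -> Rw w s1 = Rw w s2.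
Proof.
move=> E; rewrite /Rw; congr (_ && _);
  (apply: eq_forallb => x); (apply: eq_forallb => y); by rewrite !E.
Qed.

Lemma partE w n (s : P -> nat) :
  is_partition w n s = [forall x, (1 <= s x <= n)%N] && Rw w s.
Proof. by rewrite /is_partition /Rw andbA. Qed.

Lemma oc_poly (w : P -> nat) : exists f : {poly rat}, forall n : nat,
  f.[n%:R] = (order_count w n)%:R.
Proof.
pose R' (s : P -> nat) := Rw w (fun x => (s x).+1).
have HR : forall s1 s2 : P -> nat,
    (forall x y, (s1 x <= s1 y)%N = (s2 x <= s2 y)%N) -> R' s1 = R' s2.
  move=> s1 s2 E; rewrite /R' /Rw; congr (_ && _);
  (apply: eq_forallb => x); (apply: eq_forallb => y); by rewrite !ltnS ?ltnNge E.
have [f Hf] := count_poly HR.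
exists f => n; rewrite Hf; congr (_%:R).
pose h (t : {ffun P -> 'I_n}) : {ffun P -> 'I_n.+1} := [ffun x => lift ord0 (t x)].
rewrite /order_count -(@card_in_imset _ _ h); last first.
  move=> t1 t2 _ _ /ffunP E; apply/ffunP => x.
  by have := E x; rewrite !ffunE => /lift_inj.
apply: eq_card => s; apply/imsetP/idP.
- case=> t; rewrite !inE => tA ->.
  rewrite partE; apply/andP; split.
    by apply/forallP => x; rewrite ffunE lift0 /= ltn_ord.
  suff -> : Rw w (fun x => val (h t x)) = R' (fun x => val (t x)) by [].
  by apply: Rw_ext => x; rewrite ffunE /= /bump leq0n add1n.
- rewrite inE partE => /andP[/forallP Hb HR2].
  have Hb' : forall x, ((s x).-1 < n)%N.
    by move=> x; have := Hb x; case: (nat_of_ord (s x)) => // m /andP[_ ?].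
  exists [ffun x => Ordinal (Hb' x)].
    rewrite inE /R'; suff -> : Rw w (fun x => (val ([ffun x => Ordinal (Hb' x)] x)).+1) = Rw w (fun x => val (s x)) by [].
    apply: Rw_ext => x; rewrite ffunE /=.
    by have := Hb x; case: (nat_of_ord (s x)).
  apply/ffunP => x; apply/val_inj; rewrite !ffunE /= /bump leq0n add1n.
  by have := Hb x; case: (nat_of_ord (s x)).
Qed.

Lemma transfer (w l : P -> nat) (k : P -> int) (c : int) (n n' : nat) :
  injective w -> injective l ->
  (forall x, minimal x -> k x = 0) -> (forall x, maximal x -> k x = c) ->
  (forall x y, covers x y -> k y = k x + dsc w x y - dsc l x y) ->
  n'%:Z = n%:Z - c -> (order_count w n <= order_count l n')%N.
Proof.
move=> winj linj Hk0 Hkc Hkd Hn.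
pose sg (s : P -> nat) x : int := (s x)%:Z + k x - c.
have Hcp : forall s : P -> nat, is_partition w n s -> cpart l n' (sg s).
  move=> s /(part_cp winj) [h1 h2 h3]; split.
  - by move=> x mx; have := h1 x mx; rewrite /sg Hk0 //; lia.
  - by move=> x mx; have := h2 x mx; rewrite /sg Hkc //; lia.
  - by move=> x y cxy; have := h3 x y cxy; rewrite /sg (Hkd x y cxy); lia.
pose f (s : {ffun P -> 'I_n.+1}) : {ffun P -> 'I_n'.+1} :=
  [ffun x => inord (absz (sg (fun x => val (s x)) x))].
have fE : forall s : {ffun P -> 'I_n.+1}, is_partition w n (fun x => val (s x)) ->
    forall x, ((val (f s x))%:Z = sg (fun x => val (s x)) x).
  move=> s Hs x; have [h1 h2] := cp_bounds (Hcp _ Hs) x.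
  rewrite ffunE /= inordK; move: h1 h2; rewrite /sg /=; lia.
have inj : {in [set s : {ffun P -> 'I_n.+1} | is_partition w n (fun x => val (s x))] &,
    injective f}.
  move=> s1 s2; rewrite !inE => H1 H2 E; apply/ffunP => x; apply/val_inj.
  have := fE _ H1 x; have := fE _ H2 x; rewrite E /sg /=; lia.
rewrite /order_count -(card_in_imset inj); apply: subset_leq_card.
apply/subsetP => _ /imsetP [s sA ->]; rewrite inE; rewrite inE in sA.
have -> : is_partition l n' (fun x => val (f s x)) =
    is_partition l n' (fun x => absz (sg (fun x => val (s x)) x)).
  by apply: part_ext => x; have := fE _ sA x; rewrite /sg /=; lia.
exact: cp_part (Hcp _ sA).
Qed.
End Transfer.

Section Final.
Context {d : Order.disp_t} {P : finPOrderType d}.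
Local Open Scope ring_scope.

Lemma chain_to (x : P) : exists z c, [&& minimal z, path covers z c & last z c == x].
Proof.
have [z /andP[mz zx]] := min_below x.
case: (eqVneq z x) => [<-|nzx]; first by exists z, [::]; rewrite /= mz eqxx.
have zx' : (z < x)%O by rewrite lt_neqAle nzx zx.
have [c /andP[pc lc]] := chain_ex zx'.
by exists z, c; rewrite mz pc lc.
Qed.

Lemma chain_dsc (w : P -> nat) x c :
  chain_sum w x c = (size c)%:Z - 2 * fsum (dsc w) x c.
Proof.
elim: c x => [|y c IH] x; first by rewrite /chain_sum fsum_nil big_nil.
rewrite /chain_sum /= big_cons -/(chain_sum w y c) IH fsum_cons.
have : eps w x y = 1 - 2 * dsc w x y by rewrite /eps /dsc; case: ifP.
move=> ->; lia.
Qed.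

Lemma fsum_sub (w l : P -> nat) x c :
  fsum (fun x y => dsc w x y - dsc l x y) x c = fsum (dsc w) x c - fsum (dsc l) x c.
Proof.
elim: c x => [|y c IH] x; first by rewrite !fsum_nil subr0.
rewrite !fsum_cons IH; lia.
Qed.

Lemma count_eq (w l : P -> nat) (re rm : int) :
  (0 < #|P|)%N -> injective w -> injective l ->
  graded_rank w re -> graded_rank l rm ->
  exists cc : int, 2 * cc = rm - re /\
    forall n n' : nat, n'%:Z = n%:Z - cc -> order_count w n = order_count l n'.
Proof.
move=> P0 winj linj Hw Hl.
pose F := fun x y : P => dsc w x y - dsc l x y.
have H2 : forall x0 c0, max_chain x0 c0 -> 2 * fsum F x0 c0 = rm - re.
  move=> x0 c0 mc; have := Hw _ _ mc; have := Hl _ _ mc.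
  rewrite !chain_dsc /F fsum_sub; lia.
have HF : forall x0 c0 x1 c1, max_chain x0 c0 -> max_chain x1 c1 ->
    fsum F x0 c0 = fsum F x1 c1.
  by move=> x0 c0 x1 c1 m0 m1; have := H2 _ _ m0; have := H2 _ _ m1; lia.
have [k [Hk0 Hkd Hkm]] := kappa_ex HF.
case/card_gt0P: P0 => x0 _.
have [m /andP[mm _]] := max_above x0.
have [z [c /and3P[mz pz /eqP lz]]] := chain_to m.
have mc : max_chain z c by rewrite /max_chain mz pz lz mm.
exists (k m); split.
  by have := H2 _ _ mc; rewrite -Hkm // lz.
have Hkc : forall x, maximal x -> k x = k m.
  move=> x mx; have [z' [c' /and3P[mz' pz' /eqP lz']]] := chain_to x.
  have mc' : max_chain z' c' by rewrite /max_chain mz' pz' lz' mx.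
  by rewrite -lz -lz' !Hkm // (HF _ _ _ _ mc' mc).
move=> n n' Hn; apply/eqP; rewrite eqn_leq; apply/andP; split.
  apply: (transfer (k := k) (c := k m)) => //.
  by move=> x y cxy; rewrite (Hkd x y cxy) /F; lia.
apply: (transfer (k := fun x => - k x) (c := - k m)) => //.
- by move=> x mx; rewrite Hk0 // oppr0.
- by move=> x mx; rewrite Hkc.
- by move=> x y cxy; rewrite (Hkd x y cxy) /F; lia.
- lia.
Qed.
End Final.

Local Open Scope ring_scope.

Theorem theorem2p2 (d : Order.disp_t) (P : finPOrderType d)
  (w l : P -> nat) (re rm : int) :
  (0 < #|P|)%N ->
  labeling w -> labeling l ->
  graded_rank w re -> graded_rank l rm ->
  exists f g : {poly rat},
    (forall n : nat, f.[n%:R] = (order_count w n)%:R) /\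
    (forall n : nat, g.[n%:R] = (order_count l n)%:R) /\
    f \Po ('X - (re%:~R / 2)%:P) = g \Po ('X - (rm%:~R / 2)%:P).
Proof.
move=> P0 [winj _] [linj _] Hw Hl.
have [cc [H2 Heq]] := count_eq P0 winj linj Hw Hl.
have [f Hf] := oc_poly w.
have [g Hg] := oc_poly l.
exists f, g; split => //; split => //.
apply/eqP; rewrite -subr_eq0; apply/eqP.
set D := _ - _.
pose N := absz cc.
apply: (@roots_geq_poly_eq0 _ D
   [seq ((N + i)%N%:R + re%:~R / 2 : rat) | i <- iota 0 (size D)]).
- apply/allP => t /mapP [i _ ->].
  rewrite /root /D hornerD hornerN !horner_comp !hornerXsubC addrK.
  pose n' := absz ((N + i)%N%:Z - cc).
  have Hz : n'%:Z = (N + i)%N%:Z - cc by rewrite /n' /N; lia.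
  have Hq1 : (n'%:R : rat) = (N + i)%N%:R - cc%:~R.
    by rewrite !pmulrn Hz intrB.
  have Hq2 : (2 * cc%:~R : rat) = rm%:~R - re%:~R.
    by rewrite -intrB -H2 intrM.
  have E : ((N + i)%N%:R + re%:~R / 2 - rm%:~R / 2 : rat) = n'%:R.
    rewrite Hq1; lra.
  by rewrite E Hf Hg (Heq _ _ Hz) subrr.
- rewrite map_inj_uniq ?iota_uniq //.
  move=> i j /addIr /eqP; rewrite eqr_nat eqn_add2l => /eqP //.
- by rewrite size_map size_iota.
Qed.
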